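(* Fix $\lambda>0$ and a positive integer $d$, let $\tilde x_\lambda(d)$ be the unique positive solution of $d\,x=1+\lambda/(1+x)^d$, and let $\nu_\lambda(d)=\xi(d)=\sup_{x\ge0}\Xi(d,x)$ where $\Xi(d,x)=\frac{dx}{1+x}\cdot\frac{f_{d,\lambda}(x)}{1+f_{d,\lambda}(x)}$ and $f_{d,\lambda}(x)=\lambda/(1+x)^d$. Then: (1) $\nu_\lambda(d)=\frac{d\tilde x_\lambda(d)-1}{1+\tilde x_\lambda(d)}$, and $\nu_\lambda(d)=\frac1d$ when $\lambda=\lambda_c(d)=\frac{d^d}{(d-1)^{d+1}}$ (for $d\ge2$). (2) $\nu_\lambda(d)$ is increasing in $d$ for fixed $\lambda>0$. (3) $\nu_\lambda(d)$ is increasing in $\lambda$ for fixed $d>0$.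
   Context: Here $\Xi(d,x)$ is the function $d\big(\Phi(f_{d,\lambda}(x))f_{d,\lambda}(x)/((1+x)\Phi(x))\big)^2$ for $\Phi(x)=\frac{1}{2\sqrt{x(1+x)}}$ (the derivative of $\sinh^{-1}\sqrt x$), which simplifies to the stated form. In items (2)–(3), $d$ is treated as a real parameter with the same formulas. *)

(* Defs.v *)
From Stdlib Require Import Reals.
From Coquelicot Require Import Coquelicot.
Open Scope R_scope.

Definition f_dl (d l x : R) : R := l / Rpower (1 + x) d.

Definition Xi (d l x : R) : R :=
  d * x / (1 + x) * (f_dl d l x / (1 + f_dl d l x)).

(* nu_lambda(d) = xi(d) = sup_{x >= 0} Xi(d,x)  (least upper bound in Rbar,
   taken as a real; the set is bounded above by d, so this is finite). *)
Definition nu (d l : R) : R :=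
  real (Lub_Rbar (fun y => exists x, 0 <= x /\ y = Xi d l x)).

(* Main.v *)
Require Import Defs.
From Stdlib Require Import Reals Lra Lia.
From Coquelicot Require Import Coquelicot.
Open Scope R_scope.

Lemma der_g a c : -1 < c ->
  derivable_pt_lim (fun s => Rpower (1+s) a - 1 - a*s) c
    (a * Rpower (1+c) (a-1) - a).
Proof.
intros Hc. apply is_derive_Reals. unfold Rpower.
auto_derive. lra.
replace ((a - 1) * ln (1 + c)) with (a * ln (1+c) + - ln (1+c)) by ring.
rewrite exp_plus, exp_Ropp, exp_ln by lra. field. lra.
Qed.

Lemma Rpower_gt1 b e : 1 < b -> 0 < e -> 1 < Rpower b e.
Proof. intros. rewrite <- (Rpower_O b) by lra. apply Rpower_lt; lra. Qed.

Lemma Rpower_lt1 b e : 0 < b < 1 -> 0 < e -> Rpower b e < 1.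
Proof. intros. unfold Rpower. rewrite <- exp_0. apply exp_increasing.
assert (ln b < 0). { rewrite <- ln_1. apply ln_increasing; lra. } nra. Qed.

Lemma Rpower_1base a : Rpower 1 a = 1.
Proof. unfold Rpower. rewrite ln_1, Rmult_0_r, exp_0. reflexivity. Qed.

Lemma bern_strict a s : 1 < a -> -1 < s -> s <> 0 -> 1 + a*s < Rpower (1+s) a.
Proof.
intros Ha Hs Hs0.
destruct (Rlt_or_le 0 s) as [Hp|Hn].
- destruct (MVT_cor2 _ _ 0 s Hp (fun c Hc => der_g a c ltac:(lra))) as [c [E Hc]].
  assert (1 < Rpower (1+c) (a-1)) by (apply Rpower_gt1; lra).
  rewrite Rplus_0_r, Rpower_1base in E.
  assert (0 < (a * Rpower (1 + c) (a - 1) - a) * (s - 0)) by (apply Rmult_lt_0_compat; nra).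
  lra.
- assert (s < 0) by lra.
  destruct (MVT_cor2 _ _ s 0 H (fun c Hc => der_g a c ltac:(lra))) as [c [E Hc]].
  assert (Rpower (1+c) (a-1) < 1) by (apply Rpower_lt1; lra).
  rewrite Rplus_0_r, Rpower_1base in E.
  assert (0 < (a - a * Rpower (1 + c) (a - 1)) * (0 - s)) by (apply Rmult_lt_0_compat; nra).
  lra.
Qed.

Lemma bern a s : 1 <= a -> -1 < s -> 1 + a*s <= Rpower (1+s) a.
Proof.
intros Ha Hs. destruct (Req_dec s 0) as [->|Hs0].
- rewrite Rplus_0_r, Rpower_1base. lra.
- destruct (Req_dec a 1) as [->|Ha1].
  + rewrite Rpower_1 by lra. lra.
  + left. apply bern_strict; lra.
Qed.

Lemma Rpower_pos b e : 0 < Rpower b e.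
Proof. unfold Rpower. apply exp_pos. Qed.

Lemma Rpower_div_succ A B d : 0 < A -> 0 < B ->
  Rpower (B/A) (d+1) = B * Rpower B d / (A * Rpower A d).
Proof.
intros. unfold Rpower. rewrite ln_div by lra.
replace ((d+1)*(ln B - ln A)) with ((d*ln B + ln B) + -(d*ln A + ln A)) by ring.
rewrite exp_plus, exp_Ropp, !exp_plus, !exp_ln by lra.
field. split; try lra. apply Rgt_not_eq, exp_pos.
Qed.

Lemma Xi_le d l x y : 0 < d -> 0 < l -> 0 < x -> 0 <= y ->
  d * x = 1 + l / Rpower (1 + x) d ->
  Xi d l y <= (d*x-1)/(1+x).
Proof.
intros Hd Hl Hx Hy E.
set (A := 1+x). set (B := 1+y).
set (PA := Rpower A d). set (PB := Rpower B d).
assert (HPA : 0 < PA) by apply Rpower_pos.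
assert (HPB : 0 < PB) by apply Rpower_pos.
set (v := (d*x-1)/A).
assert (HvA : v * A = d*x - 1) by (unfold v, A; field; lra).
assert (Hl' : l = v * A * PA).
{ rewrite HvA. fold A PA in E. rewrite E. field. lra. }
assert (Hv : 0 < v).
{ assert (0 < l / PA) by (apply Rdiv_lt_0_compat; lra). fold A PA in E.
  assert (0 < v * A) by lra. unfold A in *. nra. }
assert (Hdv : (d - v) * A = d + 1) by (unfold A in *; lra).
assert (Bern := bern (d+1) (B/A - 1) ltac:(lra) ltac:(assert (0 < B/A) by (apply Rdiv_lt_0_compat; unfold A, B; lra); lra)).
replace (1 + (B/A - 1)) with (B/A) in Bern by ring.
rewrite Rpower_div_succ in Bern by (unfold A, B; lra). fold PA PB in Bern.
assert (HB1 : 1 + (d+1)*(B/A - 1) = d*y - v*B).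
{ assert (T : (d+1)*(B/A) = (d-v)*B) by (rewrite <- Hdv; field; unfold A; lra).
  unfold B in *. lra. }
rewrite HB1 in Bern.
assert (K : (d*y - v*B) * (A*PA) <= B*PB).
{ apply (Rmult_le_reg_r (/ (A*PA))). apply Rinv_0_lt_compat. unfold A; nra.
  replace ((d*y - v*B) * (A*PA) * / (A*PA)) with (d*y - v*B) by (field; unfold A; nra).
  exact Bern. }
unfold Xi, f_dl. fold B PB. fold A v. unfold B.
set (F := l / PB).
assert (HF : 0 < F) by (apply Rdiv_lt_0_compat; lra).
assert (K2 : F * (d*y - v*(1+y)) <= v * (1+y)).
{ unfold F. rewrite Hl'. fold B.
  replace (v * A * PA / PB * (d * y - v * B)) with (v * ((d*y - v*B) * (A*PA)) / PB) by (field; lra).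
  apply (Rmult_le_reg_r PB); auto.
  replace (v * ((d * y - v * B) * (A * PA)) / PB * PB) with (v * ((d * y - v * B) * (A * PA))) by (field; lra).
  nra. }
apply (Rmult_le_reg_r ((1+y)*(1+F))). nra.
replace (d * y / (1 + y) * (F / (1 + F)) * ((1 + y) * (1 + F))) with (d*y*F) by (field; lra).
nra.
Qed.

Lemma Xi_at d l x : 0 < d -> 0 < l -> 0 < x ->
  d * x = 1 + l / Rpower (1 + x) d ->
  Xi d l x = (d*x-1)/(1+x).
Proof.
intros Hd Hl Hx E. unfold Xi, f_dl.
replace (l / Rpower (1+x) d) with (d*x-1) by lra.
field. split; nra.
Qed.

Lemma nu_char d l x : 0 < d -> 0 < l -> 0 < x ->
  d * x = 1 + l / Rpower (1 + x) d ->
  nu d l = (d*x-1)/(1+x).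
Proof.
intros Hd Hl Hx E. unfold nu.
rewrite (is_lub_Rbar_unique _ (Finite ((d*x-1)/(1+x)))). reflexivity.
split.
- intros z [y [Hy ->]]. simpl. apply Xi_le; auto.
- intros b Hb. apply Hb. exists x. split. lra. symmetry. apply Xi_at; auto.
Qed.

Lemma sol_exists d l : 0 < d -> 0 < l ->
  exists x, 0 < x /\ d * x = 1 + l / Rpower (1 + x) d.
Proof.
intros Hd Hl.
set (h := fun x => d*x - 1 - l / Rpower (1+x) d).
assert (Hc : forall a, 0 <= a <= (1+l)/d -> continuity_pt h a).
{ intros a Ha. apply derivable_continuous_pt.
  eexists. apply is_derive_Reals. unfold h, Rpower.
  auto_derive. split. lra. split. apply Rgt_not_eq, exp_pos. exact I. reflexivity. }
assert (H0 : h 0 < 0).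
{ unfold h. rewrite Rplus_0_r, Rpower_1base. lra. }
assert (HX : 0 < h ((1+l)/d)).
{ unfold h. assert (1 < Rpower (1 + (1+l)/d) d).
  { apply Rpower_gt1; auto. assert (0 < (1+l)/d) by (apply Rdiv_lt_0_compat; lra). lra. }
  replace (d * ((1 + l) / d) - 1) with l by (field; lra).
  assert (l / Rpower (1 + (1 + l) / d) d < l).
  { apply (Rmult_lt_reg_r (Rpower (1 + (1 + l) / d) d)). lra.
    unfold Rdiv. rewrite Rmult_assoc, Rinv_l by lra. nra. }
  lra. }
assert (Hpos : 0 < (1+l)/d) by (apply Rdiv_lt_0_compat; lra).
destruct (Ranalysis5.IVT_interv h 0 ((1+l)/d) Hc Hpos H0 HX) as [z [Hz Ez]].
exists z. destruct (Req_dec z 0) as [->|Hz0]. lra.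
split. lra. unfold h in Ez. lra.
Qed.

Lemma sol_unique d l x y : 0 < d -> 0 < l -> 0 < x -> 0 < y ->
  d * x = 1 + l / Rpower (1 + x) d -> d * y = 1 + l / Rpower (1 + y) d -> x = y.
Proof.
intros Hd Hl Hx Hy Ex Ey.
assert (M : forall a b, 0 < a < b -> l / Rpower (1+b) d < l / Rpower (1+a) d).
{ intros a b Hab. assert (Rpower (1+a) d < Rpower (1+b) d) by (apply Rlt_Rpower_l; lra).
  assert (0 < Rpower (1+a) d) by apply Rpower_pos.
  unfold Rdiv. apply Rmult_lt_compat_l; auto. apply Rinv_lt_contravar; nra. }
destruct (Rtotal_order x y) as [H|[H|H]]; auto.
- specialize (M x y ltac:(lra)). nra.
- specialize (M y x ltac:(lra)). nra.
Qed.

Lemma key2 c t1 t2 : 0 < c < t1 -> t1 < t2 ->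
  t1 * ln (1 - c/t1) < t2 * ln (1 - c/t2).
Proof.
intros Hc Ht.
assert (Hct : c / t2 < 1) by (apply (Rmult_lt_reg_r t2); [lra|]; unfold Rdiv; rewrite Rmult_assoc, Rinv_l; lra).
assert (Hct1 : c / t1 < 1) by (apply (Rmult_lt_reg_r t1); [lra|]; unfold Rdiv; rewrite Rmult_assoc, Rinv_l; lra).
assert (Hc2 : 0 < c / t2) by (apply Rdiv_lt_0_compat; lra).
assert (Ha : 1 < t2 / t1) by (apply (Rmult_lt_reg_r t1); [lra|]; unfold Rdiv; rewrite Rmult_assoc, Rinv_l; lra).
assert (B := bern_strict (t2/t1) (- (c/t2)) Ha ltac:(lra) ltac:(lra)).
replace (1 + t2/t1 * - (c/t2)) with (1 - c/t1) in B by (field; lra).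
replace (1 + - (c/t2)) with (1 - c/t2) in B by ring.
unfold Rpower in B.
apply ln_increasing in B; [|lra]. rewrite ln_exp in B.
apply (Rmult_lt_compat_l t1) in B; [|lra].
replace (t1 * (t2 / t1 * ln (1 - c / t2))) with (t2 * ln (1 - c/t2)) in B by (field; lra).
exact B.
Qed.

Lemma sol_facts d l x : 0 < d -> 0 < l -> 0 < x ->
  d * x = 1 + l / Rpower (1 + x) d ->
  let v := (d*x-1)/(1+x) in
  0 < v /\ v < d /\ (d - v) * (1+x) = d + 1 /\ l = v * Rpower (1+x) (d+1).
Proof.
intros Hd Hl Hx E v.
assert (HvA : v * (1+x) = d*x - 1) by (unfold v; field; lra).
assert (HP : 0 < Rpower (1+x) d) by apply Rpower_pos.
assert (0 < l / Rpower (1+x) d) by (apply Rdiv_lt_0_compat; lra).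
assert (Hv : 0 < v) by nra.
assert (Hdv : (d - v) * (1+x) = d + 1) by lra.
split; auto. split. nra. split; auto.
rewrite Rpower_plus, Rpower_1 by lra.
assert (l = (d*x-1) * Rpower (1+x) d) by (rewrite E; field; lra).
rewrite H0, <- HvA. ring.
Qed.

Lemma frac_mono a b : 0 <= a -> a < b -> a / (1+a) < b / (1+b).
Proof.
intros. replace (a/(1+a)) with (1 - /(1+a)) by (field; lra).
replace (b/(1+b)) with (1 - /(1+b)) by (field; lra).
assert (/(1+b) < /(1+a)) by (apply Rinv_lt_contravar; nra). lra.
Qed.

Theorem lemma4p3 :
  (forall (d : nat) (l : R), (0 < d)%nat -> 0 < l ->
     (exists! x, 0 < x /\ INR d * x = 1 + l / Rpower (1 + x) (INR d)) /\
     (forall xt, 0 < xt -> INR d * xt = 1 + l / Rpower (1 + xt) (INR d) ->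
        nu (INR d) l = (INR d * xt - 1) / (1 + xt))) /\
  (forall d : nat, (2 <= d)%nat ->
     nu (INR d) (INR d ^ d / (INR d - 1) ^ (d + 1)) = 1 / INR d) /\
  (forall l d1 d2 : R, 0 < l -> 0 < d1 -> d1 < d2 -> nu d1 l < nu d2 l) /\
  (forall d l1 l2 : R, 0 < d -> 0 < l1 -> l1 < l2 -> nu d l1 < nu d l2).
Proof.
split; [|split; [|split]].
- intros d l Hd Hl. assert (HD : 0 < INR d) by (apply lt_0_INR; lia).
  split.
  + destruct (sol_exists _ _ HD Hl) as [x [Hx E]]. exists x. split; [split; auto|].
    intros y [Hy Ey]. exact (sol_unique _ _ _ _ HD Hl Hx Hy E Ey).
  + intros xt Hxt Ext. apply nu_char; auto.
- intros d Hd. set (D := INR d).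
  assert (HD : 2 <= D) by (unfold D; replace 2 with (INR 2) by reflexivity; apply le_INR; lia).
  assert (HD1 : 0 < D - 1) by lra.
  assert (Hpd : 0 < (D-1)^d) by (apply pow_lt; lra).
  assert (HpD : 0 < D^d) by (apply pow_lt; lra).
  assert (Hl : 0 < D ^ d / (D - 1) ^ (d + 1)) by (apply Rdiv_lt_0_compat; auto; apply pow_lt; lra).
  assert (Hx : 0 < 1 / (D-1)) by (apply Rdiv_lt_0_compat; lra).
  rewrite (nu_char D _ (1/(D-1))); auto; try lra.
  + field. lra.
  + unfold D; rewrite Rpower_pow by (fold D; lra); fold D.
    replace (1 + 1/(D-1)) with (D * / (D-1)) by (field; lra).
    rewrite Rpow_mult_distr, pow_inv, pow_add, pow_1.
    field. repeat split; lra.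
- intros l d1 d2 Hl Hd1 Hd12.
  destruct (sol_exists d1 l Hd1 Hl) as [x1 [Hx1 E1]].
  destruct (sol_exists d2 l ltac:(lra) Hl) as [x2 [Hx2 E2]].
  rewrite (nu_char d1 l x1), (nu_char d2 l x2); auto; try lra.
  destruct (sol_facts d1 l x1 Hd1 Hl Hx1 E1) as [Hv1 [Hv1d [Hdv1 Hl1]]].
  destruct (sol_facts d2 l x2 ltac:(lra) Hl Hx2 E2) as [Hv2 [Hv2d [Hdv2 Hl2]]].
  set (v1 := (d1 * x1 - 1) / (1 + x1)) in *.
  set (v2 := (d2 * x2 - 1) / (1 + x2)) in *.
  apply Rnot_le_lt. intros Hle.
  set (c := 1 + v1).
  set (A' := (d2+1)/(d2 - v1)).
  assert (HA2 : 1 + x2 <= A').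
  { unfold A'. replace (1+x2) with ((d2+1)/(d2-v2)) by (rewrite <- Hdv2; field; lra).
    unfold Rdiv. apply Rmult_le_compat_l. lra. apply Rinv_le_contravar; lra. }
  assert (S1 : Rpower (1+x2) (d2+1) <= Rpower A' (d2+1)) by (apply Rle_Rpower_l; lra).
  assert (EA' : A' = / (1 - c/(d2+1))) by (unfold A', c; field; lra).
  assert (EA1 : 1 + x1 = / (1 - c/(d1+1))).
  { replace (1 - c/(d1+1)) with ((d1 - v1)/(d1+1)) by (unfold c; field; lra).
    rewrite <- Hdv1. field. lra. }
  assert (K := key2 c (d1+1) (d2+1) ltac:(unfold c; lra) ltac:(lra)).
  assert (q1 : 0 < 1 - c/(d1+1)).
  { replace (1 - c/(d1+1)) with ((d1 - v1)/(d1+1)) by (unfold c; field; lra).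
    apply Rdiv_lt_0_compat; lra. }
  assert (q2 : 0 < 1 - c/(d2+1)).
  { replace (1 - c/(d2+1)) with ((d2 - v1)/(d2+1)) by (unfold c; field; lra).
    apply Rdiv_lt_0_compat; lra. }
  assert (S2 : Rpower A' (d2+1) < Rpower (1+x1) (d1+1)).
  { rewrite EA', EA1. unfold Rpower. apply exp_increasing.
    rewrite !ln_Rinv by lra. lra. }
  assert (0 < Rpower (1+x2) (d2+1)) by apply Rpower_pos.
  assert (v2 * Rpower (1+x2) (d2+1) <= v1 * Rpower A' (d2+1)).
  { apply Rmult_le_compat; lra. }
  assert (v1 * Rpower A' (d2+1) < v1 * Rpower (1+x1) (d1+1)).
  { apply Rmult_lt_compat_l; lra. }
  lra.
- intros d l1 l2 Hd Hl1 Hl12.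
  destruct (sol_exists d l1 Hd Hl1) as [x1 [Hx1 E1]].
  destruct (sol_exists d l2 Hd ltac:(lra)) as [x2 [Hx2 E2]].
  rewrite (nu_char d l1 x1) by auto. rewrite (nu_char d l2 x2) by (auto; lra).
  rewrite <- (Xi_at d l1 x1) by auto.
  apply Rlt_le_trans with (Xi d l2 x1).
  + unfold Xi, f_dl. apply Rmult_lt_compat_l.
    * apply Rdiv_lt_0_compat; nra.
    * assert (0 < Rpower (1+x1) d) by apply Rpower_pos.
      apply frac_mono.
      -- left. apply Rdiv_lt_0_compat; lra.
      -- unfold Rdiv. apply Rmult_lt_compat_r; auto. apply Rinv_0_lt_compat; auto.
  + apply Xi_le; auto; lra.
Qed.
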